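(* Let $G$ be a belt with partition $Q_1,\dots,Q_5,R_2,R_3$. Then: (a) for each $j\in\{2,3\}$, any two non-adjacent vertices of $R_j$ have no common neighbor in $Q_{5-j}$; (b) there are no edges between $R_2$ and $R_3$; (c) for each $j\in\{2,3\}$, every vertex of $Q_j$ that has a neighbor in $R_{5-j}$ is complete to $Q_{5-j}$; (d) $G[R_2]$ and $G[R_3]$ are $(P_4,2P_3)$-free.
   Context: A belt is a $(P_6,C_4,C_6)$-free graph whose vertex set is partitioned into seven sets $Q_1,\dots,Q_5,R_2,R_3$ such that: $Q_1,\dots,Q_5$ are non-empty cliques; $Q_1$ is complete to $Q_2\cup R_2\cup Q_5$ and $Q_4$ is complete to $Q_3\cup R_3\cup Q_5$; $Q_1$ is anticomplete to $Q_3\cup R_3\cup Q_4$, $Q_4$ is anticomplete to $Q_2\cup R_2\cup Q_1$, $Q_5$ is anticomplete to $Q_2\cup R_2\cup Q_3\cup R_3$; for each $j\in\{2,3\}$, $Q_j$ is complete to $R_j$, every vertex of $Q_j\cup R_j$ has a neighbor in $Q_{5-j}\cup R_{5-j}$, and no vertex of $R_j$ is adjacent to all other vertices of $R_j$. Complete/anticomplete: all edges / no edges between the sets. $2P_3$ is the disjoint union of two copies of $P_3$. *)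

(* Defs.v *)
From mathcomp Require Import all_boot.
Set Implicit Arguments. Unset Strict Implicit. Unset Printing Implicit Defensive.

Definition path_pat (n : nat) : rel 'I_n :=
  fun i j => (i.+1 == j :> nat) || (j.+1 == i :> nat).
Arguments path_pat : clear implicits.
Definition cycle_pat (n : nat) : rel 'I_n :=
  fun i j => path_pat n i j ||
     ((i == 0 :> nat) && (j == n.-1 :> nat)) ||
     ((j == 0 :> nat) && (i == n.-1 :> nat)).
Arguments cycle_pat : clear implicits.
(* 2P_3 on {0,..,5}: paths 0-1-2 and 3-4-5 *)
Definition twoP3_pat : rel 'I_6 :=
  fun i j => path_pat 6 i j && ~~ ((i == 2 :> nat) && (j == 3 :> nat))
                          && ~~ ((i == 3 :> nat) && (j == 2 :> nat)).


Section Graphs.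
Variable T : finType.
Variable e : rel T.

Definition simple_graph := symmetric e /\ irreflexive e.

Definition contains_induced_in (A : {set T}) (k : nat) (h : rel 'I_k) :=
  exists f : 'I_k -> T, injective f /\ (forall i, f i \in A) /\
    (forall i j, e (f i) (f j) = h i j).

Definition contains_induced k (h : rel 'I_k) := contains_induced_in setT h.

Definition is_clique (A : {set T}) :=
  forall x y, x \in A -> y \in A -> x != y -> e x y.
Definition complete (A B : {set T}) :=
  forall x y, x \in A -> y \in B -> e x y.
Definition anticomplete (A B : {set T}) :=
  forall x y, x \in A -> y \in B -> ~~ e x y.

Definition dominated_into (A B : {set T}) :=
  forall x, x \in A -> exists2 y, y \in B & e x y.

Definition no_universal (R : {set T}) :=
  forall x, x \in R -> exists2 y, y \in R & (y != x) && ~~ e x y.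


Definition belt (Q1 Q2 Q3 Q4 Q5 R2 R3 : {set T}) :=
  simple_graph /\
  ~ contains_induced (path_pat 6) /\
  ~ contains_induced (cycle_pat 4) /\
  ~ contains_induced (cycle_pat 6) /\
  (* partition of V(G) into seven sets: each vertex lies in exactly one *)
  (forall x : T, count (fun A : {set T} => x \in A)
                       [:: Q1; Q2; Q3; Q4; Q5; R2; R3] = 1) /\
  (Q1 != set0 /\ Q2 != set0 /\ Q3 != set0 /\ Q4 != set0 /\ Q5 != set0) /\
  (is_clique Q1 /\ is_clique Q2 /\ is_clique Q3 /\ is_clique Q4 /\ is_clique Q5) /\
  complete Q1 (Q2 :|: R2 :|: Q5) /\ complete Q4 (Q3 :|: R3 :|: Q5) /\
  anticomplete Q1 (Q3 :|: R3 :|: Q4) /\ anticomplete Q4 (Q2 :|: R2 :|: Q1) /\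
  anticomplete Q5 (Q2 :|: R2 :|: Q3 :|: R3) /\
  complete Q2 R2 /\ complete Q3 R3 /\
  dominated_into (Q2 :|: R2) (Q3 :|: R3) /\ dominated_into (Q3 :|: R3) (Q2 :|: R2) /\
  no_universal R2 /\ no_universal R3.
End Graphs.

(* Main.v *)
Require Import Defs.
From mathcomp Require Import all_boot.
Set Implicit Arguments. Unset Strict Implicit. Unset Printing Implicit Defensive.

Definition chk k (p : nat -> nat -> bool) (exc : seq (nat * nat)) :=
  all (fun i => all (fun j => (i == j) || p i j ||
     has (fun l => p i l != p j l) (iota 0 k) || ((i, j) \in exc)) (iota 0 k)) (iota 0 k).

Lemma build (T : finType) (e : rel T) k (h : rel 'I_k) (p : nat -> nat -> bool)
   (s : seq T) x0 exc :
 irreflexive e -> (forall i j : 'I_k, h i j = p i j) ->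
 (forall i j : 'I_k, e (nth x0 s i) (nth x0 s j) = h i j) ->
 chk k p exc ->
 (forall i j, (i, j) \in exc -> nth x0 s i != nth x0 s j) ->
 contains_induced e h.
Proof.
move=> irr hp he hc hx; exists (fun i => nth x0 s i); split; last by [].
move=> i j fij.
have /allP/(_ i) := hc; rewrite mem_iota ltn_ord => /(_ isT).
move/allP/(_ j); rewrite mem_iota ltn_ord => /(_ isT).
case/orP => [/orP [/orP [/eqP/val_inj //|]|]|].
- by rewrite -hp -he fij irr.
- case/hasP => l; rewrite mem_iota add0n => /andP [_ lk].
  by rewrite -[l]/(nat_of_ord (Ordinal lk)) -!hp -!he fij eqxx.
- by move/hx; rewrite fij eqxx.
Qed.

Ltac solve_e hsym hirr :=
  solve [ exact: hirr | assumption | rewrite hsym; assumption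
        | apply/negbTE; first [assumption | rewrite hsym; assumption] ].

Lemma noP6 (T : finType) (e : rel T) x0 x1 x2 x3 x4 x5 :
  symmetric e -> irreflexive e -> ~ contains_induced e (path_pat 6) ->
  e x0 x1 -> e x1 x2 -> e x2 x3 -> e x3 x4 -> e x4 x5 ->
  ~~ e x0 x2 -> ~~ e x0 x3 -> ~~ e x0 x4 -> ~~ e x0 x5 ->
  ~~ e x1 x3 -> ~~ e x1 x4 -> ~~ e x1 x5 ->
  ~~ e x2 x4 -> ~~ e x2 x5 -> ~~ e x3 x5 -> False.
Proof.
move=> hsym hirr hP; intros; apply: hP.
apply: (@build T e 6 (path_pat 6) (fun i j => (i.+1 == j) || (j.+1 == i))
          [:: x0; x1; x2; x3; x4; x5] x0 [::]) => //.
move=> [[|[|[|[|[|[|i]]]]]] Hi] [[|[|[|[|[|[|j]]]]]] Hj] //;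
  rewrite /path_pat /=; solve_e hsym hirr.
Qed.

Lemma noC6 (T : finType) (e : rel T) x0 x1 x2 x3 x4 x5 :
  symmetric e -> irreflexive e -> ~ contains_induced e (cycle_pat 6) ->
  e x0 x1 -> e x1 x2 -> e x2 x3 -> e x3 x4 -> e x4 x5 -> e x0 x5 ->
  ~~ e x0 x2 -> ~~ e x0 x3 -> ~~ e x0 x4 ->
  ~~ e x1 x3 -> ~~ e x1 x4 -> ~~ e x1 x5 ->
  ~~ e x2 x4 -> ~~ e x2 x5 -> ~~ e x3 x5 -> False.
Proof.
move=> hsym hirr hP; intros; apply: hP.
apply: (@build T e 6 (cycle_pat 6)
   (fun i j => (i.+1 == j) || (j.+1 == i) || ((i == 0) && (j == 5)) || ((j == 0) && (i == 5)))
          [:: x0; x1; x2; x3; x4; x5] x0 [::]) => //.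
move=> [[|[|[|[|[|[|i]]]]]] Hi] [[|[|[|[|[|[|j]]]]]] Hj] //;
  rewrite /cycle_pat /path_pat /=; solve_e hsym hirr.
Qed.

Lemma noC4 (T : finType) (e : rel T) x0 x1 x2 x3 :
  symmetric e -> irreflexive e -> ~ contains_induced e (cycle_pat 4) ->
  e x0 x1 -> e x1 x2 -> e x2 x3 -> e x0 x3 ->
  ~~ e x0 x2 -> ~~ e x1 x3 -> x0 != x2 -> x1 != x3 -> False.
Proof.
move=> hsym hirr hP; intros; apply: hP.
apply: (@build T e 4 (cycle_pat 4)
   (fun i j => (i.+1 == j) || (j.+1 == i) || ((i == 0) && (j == 3)) || ((j == 0) && (i == 3)))
          [:: x0; x1; x2; x3] x0 [:: (0,2); (2,0); (1,3); (3,1)]) => //.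
- move=> [[|[|[|[|i]]]] Hi] [[|[|[|[|j]]]] Hj] //;
  rewrite /cycle_pat /path_pat /=; solve_e hsym hirr.
- move=> i j; rewrite !inE => /or4P [] /eqP [-> ->] //=; by rewrite eq_sym.
Qed.
Record half (T : finType) (e : rel T) (A B C D F R S : {set T}) : Prop := Half {
  h_sym : symmetric e; h_irr : irreflexive e;
  h_P6 : ~ contains_induced e (path_pat 6);
  h_C4 : ~ contains_induced e (cycle_pat 4);
  h_C6 : ~ contains_induced e (cycle_pat 6);
  h_A : exists a, a \in A; h_D : exists d, d \in D; h_F : exists c, c \in F;
  cAB : complete e A B; cAR : complete e A R; cAF : complete e A F;
  cDC : complete e D C; cDS : complete e D S; cDF : complete e D F;
  aAC : anticomplete e A C; aAS : anticomplete e A S; aAD : anticomplete e A D;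
  aDB : anticomplete e D B; aDR : anticomplete e D R;
  aFB : anticomplete e F B; aFR : anticomplete e F R;
  aFC : anticomplete e F C; aFS : anticomplete e F S;
  cBR : complete e B R; cCS : complete e C S;
  domR : dominated_into e R (C :|: S);
  nuR : no_universal e R; nuS : no_universal e S;
  clC : is_clique e C }.


Lemma part_a (T : finType) (e : rel T) A B C D F R S :
  half e A B C D F R S -> forall u v w, u \in R -> v \in R -> u != v -> ~~ e u v ->
  w \in C :|: S -> ~~ (e u w && e v w).
Proof.
move=> H u v w uR vR nuv euv wCS; apply/negP => /andP [euw evw].
have hsym := h_sym H; have hirr := h_irr H.
case: (h_A H) => a aA; case: (h_F H) => c cF.
have eau := cAR H aA uR; have eav := cAR H aA vR.
have naw : ~~ e a w by case/setUP: wCS => [/(aAC H aA)|/(aAS H aA)].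
have eac := cAF H aA cF.
have ncw : ~~ e c w by case/setUP: wCS => [/(aFC H cF)|/(aFS H cF)].
have naw' : a != w by apply/eqP => aw; move: ncw; rewrite -aw hsym eac.
apply: (@noC4 T e u a v w (h_sym H) (h_irr H) (h_C4 H)); solve_e hsym hirr.
Qed.

Lemma part_b (T : finType) (e : rel T) A B C D F R S :
  half e A B C D F R S -> half e D C B A F S R -> anticomplete e R S.
Proof.
move=> H H' u v uR vS; apply/negP => euv.
have hsym := h_sym H; have hirr := h_irr H.
case: (nuR H uR) => u' u'R /andP [nu'u neuu'].
case: (nuS H vS) => v' v'S /andP [nv'v nevv'].
have nu'v : ~~ e u' v.
  have := part_a H uR u'R _ neuu' (w := v); rewrite eq_sym nu'u inE vS orbT euv /=.
  by move/(_ isT isT).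
have nv'u : ~~ e v' u.
  have := part_a H' vS v'S _ nevv' (w := u); rewrite eq_sym nv'v inE uR orbT.
  by rewrite hsym euv /= => /(_ isT isT).
case: (h_A H) => a aA; case: (h_D H) => d dD.
have eau := cAR H aA uR; have eau' := cAR H aA u'R.
have edv := cDS H dD vS; have edv' := cDS H dD v'S.
have nav := aAS H aA vS; have nav' := aAS H aA v'S; have nad := aAD H aA dD.
have ndu := aDR H dD uR; have ndu' := aDR H dD u'R.
case: (boolP (e u' v')) => eu'v'.
- apply: (@noC6 T e a u v d v' u' hsym hirr (h_C6 H)); solve_e hsym hirr.
- apply: (@noP6 T e u' a u v d v' hsym hirr (h_P6 H)); solve_e hsym hirr.
Qed.

Lemma part_c (T : finType) (e : rel T) A B C D F R S :
  half e A B C D F R S -> half e D C B A F S R ->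
  forall x y z, x \in B -> y \in S -> e x y -> z \in C -> e x z.
Proof.
move=> H H' x y z xB yS exy zC; apply/negPn/negP => nxz.
have hsym := h_sym H; have hirr := h_irr H.
case: (nuS H yS) => y' y'S /andP [ny'y neyy'].
have nxy' : ~~ e x y'.
  have := part_a H' yS y'S _ neyy' (w := x); rewrite eq_sym ny'y inE xB /=.
  by rewrite hsym exy /= => /(_ isT isT); rewrite hsym.
case: (h_A H) => a aA; case: (h_F H) => c cF.
have eac := cAF H aA cF; have eax := cAB H aA xB.
have ezy := cCS H zC yS; have ezy' := cCS H zC y'S.
have ncx := aFB H cF xB; have ncy := aFS H cF yS; have ncz := aFC H cF zC.
have ncy' := aFS H cF y'S; have nay := aAS H aA yS; have naz := aAC H aA zC.
have nay' := aAS H aA y'S.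
apply: (@noP6 T e c a x y z y' hsym hirr (h_P6 H)); solve_e hsym hirr.
Qed.

Lemma dom_C (T : finType) (e : rel T) A B C D F R S :
  half e A B C D F R S -> anticomplete e R S ->
  forall p, p \in R -> exists2 w, w \in C & e p w.
Proof.
move=> H hb p pR; case: (domR H pR) => w /setUP [wC|wS] epw; first by exists w.
by move: (hb _ _ pR wS); rewrite epw.
Qed.

Lemma d_P4 (T : finType) (e : rel T) A B C D F R S :
  half e A B C D F R S -> anticomplete e R S -> forall p0 p1 p2 p3,
  p0 \in R -> p1 \in R -> p2 \in R -> p3 \in R ->
  e p0 p1 -> e p1 p2 -> e p2 p3 -> ~~ e p0 p2 -> ~~ e p0 p3 -> ~~ e p1 p3 ->
  p0 != p2 -> p0 != p3 -> False.
Proof.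
move=> H hb p0 p1 p2 p3 r0 r1 r2 r3 e01 e12 e23 n02 n03 n13 d02 d03.
have hsym := h_sym H; have hirr := h_irr H.
case: (dom_C H hb r0) => w wC e0w.
have wCS : w \in C :|: S by rewrite inE wC.
have n2w : ~~ e p2 w by have := part_a H r0 r2 d02 n02 wCS; rewrite e0w.
have n3w : ~~ e p3 w by have := part_a H r0 r3 d03 n03 wCS; rewrite e0w.
case: (h_D H) => d dD; case: (h_F H) => c cF.
have edc := cDF H dD cF; have edw := cDC H dD wC.
have ncw := aFC H cF wC; have nc1 := aFR H cF r1; have nc2 := aFR H cF r2.
have nc3 := aFR H cF r3; have nd0 := aDR H dD r0; have nd1 := aDR H dD r1.
have nd2 := aDR H dD r2; have nd3 := aDR H dD r3.
case: (boolP (e p1 w)) => e1w.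
- apply: (@noP6 T e c d w p1 p2 p3 hsym hirr (h_P6 H)); solve_e hsym hirr.
- apply: (@noP6 T e d w p0 p1 p2 p3 hsym hirr (h_P6 H)); solve_e hsym hirr.
Qed.

Lemma d_2P3 (T : finType) (e : rel T) A B C D F R S :
  half e A B C D F R S -> anticomplete e R S -> forall p0 p1 p2 p3 p4 p5,
  p0 \in R -> p1 \in R -> p2 \in R -> p3 \in R -> p4 \in R -> p5 \in R ->
  e p0 p1 -> e p1 p2 -> e p3 p4 -> e p4 p5 ->
  ~~ e p0 p2 -> ~~ e p0 p3 -> ~~ e p0 p4 -> ~~ e p0 p5 -> ~~ e p1 p3 ->
  ~~ e p1 p4 -> ~~ e p1 p5 -> ~~ e p2 p3 -> ~~ e p2 p4 -> ~~ e p2 p5 -> ~~ e p3 p5 ->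
  p0 != p2 -> p1 != p3 -> p1 != p4 -> p1 != p5 -> p4 != p0 -> p4 != p2 -> p3 != p5 ->
  False.
Proof.
move=> H hb p0 p1 p2 p3 p4 p5 r0 r1 r2 r3 r4 r5 e01 e12 e34 e45 n02 n03 n04 n05
  n13 n14 n15 n23 n24 n25 n35 d02 d13 d14 d15 d40 d42 d35.
have hsym := h_sym H; have hirr := h_irr H.
case: (dom_C H hb r1) => w wC e1w.
have wCS : w \in C :|: S by rewrite inE wC.
have n3w : ~~ e p3 w by have := part_a H r1 r3 d13 n13 wCS; rewrite e1w.
have n4w : ~~ e p4 w by have := part_a H r1 r4 d14 n14 wCS; rewrite e1w.
have n5w : ~~ e p5 w by have := part_a H r1 r5 d15 n15 wCS; rewrite e1w.
have n02w := part_a H r0 r2 d02 n02 wCS.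
case: (dom_C H hb r4) => w' w'C e4w'.
have w'CS : w' \in C :|: S by rewrite inE w'C.
have n40 : ~~ e p4 p0 by rewrite hsym.
have n41 : ~~ e p4 p1 by rewrite hsym.
have n42 : ~~ e p4 p2 by rewrite hsym.
have d41 : p4 != p1 by rewrite eq_sym.
have n0w' : ~~ e p0 w' by have := part_a H r4 r0 d40 n40 w'CS; rewrite e4w'.
have n1w' : ~~ e p1 w' by have := part_a H r4 r1 d41 n41 w'CS; rewrite e4w'.
have n2w' : ~~ e p2 w' by have := part_a H r4 r2 d42 n42 w'CS; rewrite e4w'.
have n35w' := part_a H r3 r5 d35 n35 w'CS.
have ww' : w != w' by apply/eqP => ww; move: n1w'; rewrite -ww e1w.
have eww' := clC H wC w'C ww'.
have [x [ex1 nxw hx]] : exists x, [/\ e x p1, ~~ e x w & (x = p0 \/ x = p2)].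
  case: (boolP (e p0 w)) => e0w.
  - by exists p2; split => //; [rewrite hsym | move: n02w; rewrite e0w | right].
  - by exists p0; split => //; left.
have [y [ey4 nyw' hy]] : exists y, [/\ e y p4, ~~ e y w' & (y = p3 \/ y = p5)].
  case: (boolP (e p3 w')) => e3w.
  - by exists p5; split => //; [rewrite hsym | move: n35w'; rewrite e3w | right].
  - by exists p3; split => //; left.
apply: (@noP6 T e x p1 w w' p4 y hsym hirr (h_P6 H));
  case: hx => ?; case: hy => ?; subst x y; solve_e hsym hirr.
Qed.

Lemma compl_sub (T : finType) (e : rel T) (A B B' : {set T}) :
  complete e A B -> {subset B' <= B} -> complete e A B'.
Proof. by move=> c s x y xA /s yB; apply: c. Qed.
Lemma acompl_sub (T : finType) (e : rel T) (A B B' : {set T}) :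
  anticomplete e A B -> {subset B' <= B} -> anticomplete e A B'.
Proof. by move=> c s x y xA /s yB; apply: c. Qed.
Lemma dom_sub (T : finType) (e : rel T) (A A' B : {set T}) :
  dominated_into e A B -> {subset A' <= A} -> dominated_into e A' B.
Proof. by move=> d s x /s; apply: d. Qed.

Ltac ssub := let x := fresh in move=> x; rewrite !inE => ->; rewrite ?orbT //=.

Theorem theorem4p1 (T : finType) (e : rel T) (Q1 Q2 Q3 Q4 Q5 R2 R3 : {set T}) :
  belt e Q1 Q2 Q3 Q4 Q5 R2 R3 ->
  [/\ (* (a) *)
      (forall u v w, u \in R2 -> v \in R2 -> u != v -> ~~ e u v ->
         w \in Q3 -> ~~ (e u w && e v w)) /\
      (forall u v w, u \in R3 -> v \in R3 -> u != v -> ~~ e u v ->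
         w \in Q2 -> ~~ (e u w && e v w)),
      (* (b) *)
      anticomplete e R2 R3,
      (* (c) *)
      (forall x, x \in Q2 -> (exists2 y, y \in R3 & e x y) -> complete e [set x] Q3) /\
      (forall x, x \in Q3 -> (exists2 y, y \in R2 & e x y) -> complete e [set x] Q2) &
      (* (d) *)
      [/\ ~ contains_induced_in e R2 (path_pat 4), ~ contains_induced_in e R2 twoP3_pat,
          ~ contains_induced_in e R3 (path_pat 4) & ~ contains_induced_in e R3 twoP3_pat]].
Proof.
move=> [[hsym hirr] [hP6 [hC4 [hC6 [hpart [[n1 [n2 [n3 [n4 n5]]]]
  [[k1 [k2 [k3 [k4 k5]]]] [c1 [c4 [a1 [a4 [a5 [c2 [c3 [d2 [d3 [u2 u3]]]]]]]]]]]]]]]]].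
have ne : forall A : {set T}, A != set0 -> exists x, x \in A.
  by move=> A /set0Pn [x xA]; exists x.
have H : half e Q1 Q2 Q3 Q4 Q5 R2 R3.
  apply: Half => //; try exact: ne;
  try (apply: compl_sub; [eassumption | ssub]);
  try (apply: acompl_sub; [eassumption | ssub]).
  apply: dom_sub d2 _; ssub.
have H' : half e Q4 Q3 Q2 Q1 Q5 R3 R2.
  apply: Half => //; try exact: ne;
  try (apply: compl_sub; [eassumption | ssub]);
  try (apply: acompl_sub; [eassumption | ssub]).
  apply: dom_sub d3 _; ssub.
have hb := part_b H H'.
have hb' := part_b H' H.
split.
- split=> u v w uR vR nuv neuv wQ.
  + by apply: (part_a H uR vR nuv neuv); rewrite inE wQ.
  + by apply: (part_a H' uR vR nuv neuv); rewrite inE wQ.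
- exact: hb.
- split=> x xQ [y yR exy] x' z; rewrite inE => /eqP -> zQ.
  + exact: (part_c H H' xQ yR exy zQ).
  + exact: (part_c H' H xQ yR exy zQ).
- split; case=> f [finj [fin fe]].
  + apply: (d_P4 H hb (p0 := f (@Ordinal 4 0 isT)) (p1 := f (@Ordinal 4 1 isT)) (p2 := f (@Ordinal 4 2 isT))
       (p3 := f (@Ordinal 4 3 isT))); by rewrite ?fe ?(inj_eq finj) ?fin.
  + apply: (d_2P3 H hb (p0 := f (@Ordinal 6 0 isT)) (p1 := f (@Ordinal 6 1 isT)) (p2 := f (@Ordinal 6 2 isT))
       (p3 := f (@Ordinal 6 3 isT)) (p4 := f (@Ordinal 6 4 isT)) (p5 := f (@Ordinal 6 5 isT)));
       by rewrite ?fe ?(inj_eq finj) ?fin.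
  + apply: (d_P4 H' hb' (p0 := f (@Ordinal 4 0 isT)) (p1 := f (@Ordinal 4 1 isT)) (p2 := f (@Ordinal 4 2 isT))
       (p3 := f (@Ordinal 4 3 isT))); by rewrite ?fe ?(inj_eq finj) ?fin.
  + apply: (d_2P3 H' hb' (p0 := f (@Ordinal 6 0 isT)) (p1 := f (@Ordinal 6 1 isT)) (p2 := f (@Ordinal 6 2 isT))
       (p3 := f (@Ordinal 6 3 isT)) (p4 := f (@Ordinal 6 4 isT)) (p5 := f (@Ordinal 6 5 isT)));
       by rewrite ?fe ?(inj_eq finj) ?fin.
Qed.
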